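(* Let $T$ be a minimal rotation on a locally connected compact metrizable group $X$ and let $f\colon X\to G$ be a continuous topologically recurrent cocycle for $T$ with values in a nilpotent locally compact second countable group $G$. Let $H$ be a closed subgroup of $G$ and $y\mapsto H_y$ a consistent selection of subgroups in the essential ranges of $f$ satisfying $E_y(f)\subseteq N(H_y)$ for every $y\in X$, and suppose there exists $x\in X$ with $E_x(f)=H_x$. Let $z\in X$ and $g\in N(H_z)\setminus H_z$. Then there is a neighbourhood $U$ of $\mathbf 1_G$ such that for all integers $n$, \[f(n,z)\,gH_z\,f(n,z)^{-1}\cap U=\varnothing.\]
   Context: The cocycle is $f(n,x)=f(T^{n-1}x)\cdots f(x)$ for $n\ge1$, $f(0,x)=\mathbf 1_G$, $f(n,x)=f(-n,T^nx)^{-1}$ for $n<0$. $f$ is topologically recurrent if for every open neighbourhood $U$ of $\mathbf 1_G$ and nonempty open $\mathcal O\subseteq X$ there is $n\neq0$ with $T^{-n}\mathcal O\cap\mathcal O\cap\{y:f(n,y)\in U\}\neq\varnothing$; $E_x(f)$ is the set of $g$ such that this holds for every open neighbourhood $U$ of $g$ and every open neighbourhood $\mathcal O$ of $x$. For a subgroup $L$, $N(L)=\{g\in G:gLg^{-1}=L\}$. $H^G=\{gHg^{-1}:g\in G\}$, topologised via the bijection with $G/N(H)$. A consistent selection is a continuous map $y\mapsto H_y$, $X\to H^G$, with $H_x\subseteq E_x(f)$ and $H_{T^nx}=f(n,x)H_xf(n,x)^{-1}$ for all $x,n$. *)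

(* Defs.v *)
From HB Require Import structures.
From mathcomp Require Import all_boot all_order all_algebra.
From mathcomp Require Import all_classical all_reals topology.
From mathcomp Require Import Rstruct Rstruct_topology.
From Stdlib Require Import Rdefinitions.
Set Implicit Arguments. Unset Strict Implicit. Unset Printing Implicit Defensive.
Import Order.TTheory GRing.Theory Num.Theory.
Local Open Scope classical_set_scope.

Section GroupDefs.
Variables (G : Type) (mul : G -> G -> G) (inv : G -> G) (one : G).

Definition is_group : Prop :=
  (forall x y z, mul x (mul y z) = mul (mul x y) z) /\
  (forall x, mul one x = x) /\ (forall x, mul x one = x) /\
  (forall x, mul (inv x) x = one) /\ (forall x, mul x (inv x) = one).

Definition is_subgroup (L : set G) : Prop :=
  L one /\ (forall x y, L x -> L y -> L (mul x y)) /\ (forall x, L x -> L (inv x)).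

Definition conjset (g : G) (L : set G) : set G :=
  (fun h => mul (mul g h) (inv g)) @` L.

Definition lcoset (g : G) (L : set G) : set G := (fun h => mul g h) @` L.

Definition normaliser (L : set G) : set G := [set g | conjset g L = L].

Definition conj_class (H : set G) : set (set G) := [set K | exists g, K = conjset g H].

Definition commg (x y : G) : G := mul (mul (inv x) (inv y)) (mul x y).

Definition gen_subgroup (A : set G) : set G :=
  [set g | forall L, is_subgroup L -> A `<=` L -> L g].

Fixpoint lower_central (i : nat) : set G :=
  match i with
  | 0 => setT
  | i'.+1 => gen_subgroup [set c | exists a b, lower_central i' a /\ c = commg a b]
  end.

Definition nilpotent_group : Prop := exists c, lower_central c = [set one].

Definition zpow (a : G) (n : int) : G :=
  match n with
  | Posz k => iter k (mul a) one
  | Negz k => iter k.+1 (mul (inv a)) one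
  end.
End GroupDefs.

Definition is_topgroup (G : topologicalType) (mul : G -> G -> G) (inv : G -> G)
  (one : G) : Prop :=
  is_group mul inv one /\
  continuous (fun p : G * G => mul p.1 p.2) /\ continuous inv.

Definition locally_connected (T : topologicalType) : Prop :=
  forall (x : T) (U : set T), nbhs x U ->
    exists V : set T, open V /\ connected V /\ V x /\ V `<=` U.

Definition metrizable (T : topologicalType) : Prop :=
  exists d : T -> T -> R,
    (forall x y, d x y = 0%R <-> x = y) /\ (forall x y, d x y = d y x) /\
    (forall x y z, (d x z <= d x y + d y z)%R) /\
    (forall (x : T) (A : set T),
        nbhs x A <-> exists eps : R, (0 < eps)%R /\ [set y | (d x y < eps)%R] `<=` A).

Definition minimal_map (T : topologicalType) (S : T -> T) : Prop :=
  forall A : set T, closed A -> S @` A = A -> A = set0 \/ A = setT.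

Section Cocycle.
Variables (X : Type) (mulX : X -> X -> X) (invX : X -> X) (oneX : X) (a : X).
Variables (G : Type) (mul : G -> G -> G) (inv : G -> G) (one : G) (f : X -> G).

Definition rotn (n : int) (x : X) : X := mulX (zpow mulX invX oneX a n) x.

Fixpoint cocycle_nat (k : nat) (x : X) : G :=
  match k with
  | 0 => one
  | k'.+1 => mul (f (rotn (Posz k') x)) (cocycle_nat k' x)
  end.

(* f(n,x) for n : int; f(n,x) = f(-n,T^n x)^{-1} for n < 0 *)
Definition cocycle (n : int) (x : X) : G :=
  match n with
  | Posz k => cocycle_nat k x
  | Negz k => inv (cocycle_nat k.+1 (rotn (Negz k) x))
  end.
End Cocycle.

Section Recurrence.
Variables (X G : topologicalType) (Tn : int -> X -> X) (fn : int -> X -> G) (one : G).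

Definition top_recurrent : Prop :=
  forall U : set G, open U -> U one ->
  forall O : set X, open O -> O !=set0 ->
  exists n : int, n != 0 /\ exists y, O y /\ O (Tn n y) /\ U (fn n y).

Definition ess_range (x : X) : set G :=
  [set g | forall U : set G, open U -> U g ->
           forall O : set X, open O -> O x ->
           exists n : int, n != 0 /\ exists y, O y /\ O (Tn n y) /\ U (fn n y)].
End Recurrence.

(* Main.v *)
Require Import Defs.
From HB Require Import structures.
From mathcomp Require Import all_boot all_order all_algebra.
From mathcomp Require Import all_classical all_reals topology.
From Stdlib Require Import Classical.
Set Implicit Arguments. Unset Strict Implicit. Unset Printing Implicit Defensive.
Local Open Scope classical_set_scope.


Section GAlg.
Variables (G : Type) (mul : G -> G -> G) (inv : G -> G) (one : G).
Hypothesis Hgrp : is_group mul inv one.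

Lemma gA x y z : mul x (mul y z) = mul (mul x y) z.
Proof. by case: Hgrp. Qed.
Lemma g1m x : mul one x = x. Proof. by case: Hgrp => _ []. Qed.
Lemma gm1 x : mul x one = x. Proof. by case: Hgrp => _ [_ []]. Qed.
Lemma gVm x : mul (inv x) x = one. Proof. by case: Hgrp => _ [_ [_ []]]. Qed.
Lemma gmV x : mul x (inv x) = one. Proof. by case: Hgrp => _ [_ [_ []]]. Qed.
Lemma gKV x y : mul (inv x) (mul x y) = y.
Proof. by rewrite gA gVm g1m. Qed.
Lemma gVK x y : mul x (mul (inv x) y) = y.
Proof. by rewrite gA gmV g1m. Qed.
Lemma ginv_uniq x y : mul x y = one -> y = inv x.
Proof. by move=> h; rewrite -[y](gKV x) h gm1. Qed.
Lemma gII x : inv (inv x) = x.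
Proof. by apply/esym/ginv_uniq; rewrite gVm. Qed.
Lemma gIM x y : inv (mul x y) = mul (inv y) (inv x).
Proof. by apply/esym/ginv_uniq; rewrite -gA gVK gmV. Qed.
Lemma gI1 : inv one = one.
Proof. by apply/esym/ginv_uniq; rewrite gm1. Qed.

Definition gconj (m x : G) := mul (mul m x) (inv m).

End GAlg.

Ltac gsimp Hgrp := rewrite /gconj /Defs.commg;
  repeat progress rewrite ?(gIM Hgrp) ?(gII Hgrp) ?(gI1 Hgrp) -?(gA Hgrp)
    ?(gKV Hgrp) ?(gVK Hgrp) ?(gmV Hgrp) ?(gVm Hgrp) ?(g1m Hgrp) ?(gm1 Hgrp).

Section GAlg2.
Variables (G : Type) (mul : G -> G -> G) (inv : G -> G) (one : G).
Hypothesis Hgrp : is_group mul inv one.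
Local Notation conj := (gconj mul inv).
Local Notation cm := (Defs.commg mul inv).

Lemma C1 x m : mul x (cm x (inv m)) = conj m x.
Proof. by gsimp Hgrp. Qed.
Lemma C2 x y m : cm (mul x y) m = mul (conj (inv y) (cm x m)) (cm y m).
Proof. by gsimp Hgrp. Qed.
Lemma C3 x m : cm (inv x) m = conj x (inv (cm x m)).
Proof. by gsimp Hgrp. Qed.
Lemma C4 n x m : cm (conj n x) m = conj n (cm x (conj (inv n) m)).
Proof. by gsimp Hgrp. Qed.
Lemma C5 m : cm one m = one.
Proof. by gsimp Hgrp. Qed.
Lemma C6 h m : cm h m = mul (inv h) (conj (inv m) h).
Proof. by gsimp Hgrp. Qed.
Lemma conjM a b x : conj (mul a b) x = conj a (conj b x).
Proof. by gsimp Hgrp. Qed.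
Lemma conjK m x : conj (inv m) (conj m x) = x.
Proof. by gsimp Hgrp. Qed.
Lemma conj1 x : conj one x = x.
Proof. by gsimp Hgrp. Qed.
End GAlg2.


Section Top.
Variables (G : topologicalType) (mul : G -> G -> G) (inv : G -> G) (one : G).
Hypothesis HG : is_topgroup mul inv one.
Let Hgrp : is_group mul inv one := HG.1.
Local Notation conj := (gconj mul inv).
Local Notation cm := (Defs.commg mul inv).

Lemma cvg_mul (T : Type) (F : set_system T) {FF : Filter F} (f g : T -> G) a b :
  f @ F --> a -> g @ F --> b -> (fun x => mul (f x) (g x)) @ F --> mul a b.
Proof.
move=> fa gb; apply: continuous2_cvg => //.
exact: (HG.2.1 (a, b)).
Qed.

Lemma cvg_inv (T : Type) (F : set_system T) {FF : Filter F} (f : T -> G) a :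
  f @ F --> a -> (fun x => inv (f x)) @ F --> inv a.
Proof.
move=> fa; apply: (@continuous_cvg _ _ _ _ _ f inv) => //.
exact: HG.2.2.
Qed.

Lemma nbhs_pre (x : G) (phi : G -> G) (S : set G) :
  phi @ x --> phi x -> open S -> S (phi x) -> nbhs x [set y | S (phi y)].
Proof.
move=> c oS Sx; apply: c.
by move: oS; rewrite openE => /(_ _ Sx).
Qed.

End Top.


Section Z.
Variables (G : topologicalType) (mul : G -> G -> G) (inv : G -> G) (one : G).
Hypothesis HG : is_topgroup mul inv one.
Let Hgrp : is_group mul inv one := HG.1.
Local Notation conj := (gconj mul inv).
Local Notation cm := (Defs.commg mul inv).
Variable H : set G.
Hypothesis HHsub : is_subgroup mul inv one H.
Hypothesis HHcl : closed H.

Let H1 : H one. Proof. by case: HHsub. Qed.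
Let HM x y : H x -> H y -> H (mul x y). Proof. by case: HHsub => _ [hm _]; apply: hm. Qed.
Let HV x : H x -> H (inv x). Proof. by case: HHsub => _ [_ hv]; apply: hv. Qed.

Definition NH (m : G) := forall h, H h -> H (conj m h) /\ H (conj (inv m) h).

Lemma NH1 : NH one.
Proof. by move=> h Hh; rewrite (gI1 Hgrp) (conj1 Hgrp). Qed.
Lemma NHV m : NH m -> NH (inv m).
Proof. by move=> Nm h /Nm [? ?]; rewrite (gII Hgrp). Qed.
Lemma NHM a b : NH a -> NH b -> NH (mul a b).
Proof.
move=> Na Nb h Hh; rewrite (conjM Hgrp) (gIM Hgrp) (conjM Hgrp); split.
  by apply: (Na _ (Nb _ Hh).1).1.
by apply: (Nb _ (Na _ Hh).2).2.
Qed.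
Lemma HNH h : H h -> NH h.
Proof.
move=> Hh k Hk; rewrite /gconj; split; apply: HM; try apply: HM => //;
 by [apply: HV | apply: HV; apply: HV].
Qed.
Lemma normNH m : normaliser mul inv H m -> NH m.
Proof.
rewrite /normaliser /= => E h Hh; split.
  by rewrite -E; exists h.
move: Hh; rewrite -{1}E => -[k Hk <-].
by have := conjK Hgrp m k; rewrite /gconj => ->.
Qed.

Lemma closedNH : closed NH.
Proof.
rewrite -openC openE => x /= nNx.
have [h [Hh hh]] :
   exists h, H h /\ ~ (H (conj x h) /\ H (conj (inv x) h)).
  apply: NNPP => nE; apply: nNx => h Hh.
  by apply: NNPP => nC; apply: nE; exists h.
case/not_and_or: hh => nH.
- have c : (fun y => conj y h) @ x --> conj x h.
    have i1 : (fun y : G => y) @ x --> x by exact: cvg_id.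
    have i2 : (fun y : G => h) @ x --> h by exact: cvg_cst.
    exact (cvg_mul HG (cvg_mul HG i1 i2) (cvg_inv HG i1)).
  have oC : open (~` H) by rewrite openC.
  change (nbhs x (~` NH)); apply: (filterS _ (nbhs_pre c oC nH)) => y /= nHy Ny.
  by apply: nHy; apply: (Ny _ Hh).1.
- have c : (fun y => conj (inv y) h) @ x --> conj (inv x) h.
    have i1 : (fun y : G => y) @ x --> x by exact: cvg_id.
    have i2 : (fun y : G => h) @ x --> h by exact: cvg_cst.
    exact (cvg_mul HG (cvg_mul HG (cvg_inv HG i1) i2) (cvg_inv HG (cvg_inv HG i1))).
  have oC : open (~` H) by rewrite openC.
  change (nbhs x (~` NH)); apply: (filterS _ (nbhs_pre c oC nH)) => y /= nHy Ny.
  by apply: nHy; apply: (Ny _ Hh).2.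
Qed.

Lemma NHconj n m : NH n -> NH m -> NH (conj n m).
Proof. by move=> Nn Nm; apply: NHM; [apply: NHM|apply: NHV]. Qed.

Fixpoint Zs j : set G :=
  if j is j'.+1 then [set x | NH x /\ forall m, NH m -> Zs j' (cm x m)] else H.

Lemma Zs_props j :
  [/\ (forall x, Zs j x -> NH x), Zs j one,
      (forall x y, Zs j x -> Zs j y -> Zs j (mul x y)),
      (forall x, Zs j x -> Zs j (inv x)) &
      (forall n x, NH n -> Zs j x -> Zs j (conj n x))].
Proof.
elim: j => [|j [INH I1 IM IV IC]].
  split => //; first exact: HNH.
  by move=> n x Nn Hx; apply: (Nn _ Hx).1.
split.
- by move=> x [].
- by split; [exact: NH1| move=> m _; rewrite (C5 Hgrp)].
- move=> x y [Nx Zx] [Ny Zy]; split; first exact: NHM.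
  move=> m Nm; rewrite (C2 Hgrp); apply: IM; last exact: Zy.
  by apply: IC; [exact: NHV| exact: Zx].
- move=> x [Nx Zx]; split; first exact: NHV.
  by move=> m Nm; rewrite (C3 Hgrp); apply: IC => //; apply: IV; apply: Zx.
- move=> n x Nn [Nx Zx]; split; first exact: NHconj.
  move=> m Nm; rewrite (C4 Hgrp); apply: IC => //; apply: Zx.
  by apply: NHconj => //; apply: NHV.
Qed.

Lemma Zs_mono j x : Zs j x -> Zs j.+1 x.
Proof.
elim: j x => [|j IH] x.
  move=> Hx; split; first exact: HNH.
  by move=> m Nm; rewrite (C6 Hgrp); apply: HM; [apply: HV|apply: (Nm _ Hx).2].
by move=> [Nx Zx]; split => // m Nm; apply: IH; apply: Zx.
Qed.

Lemma Zs_closed j : closed (Zs j).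
Proof.
elim: j => [|j IH] //=.
rewrite -openC openE => x /= nZ.
have [nN|[m [Nm nZm]]] : ~ NH x \/ exists m, NH m /\ ~ Zs j (cm x m).
  apply: NNPP => K; apply: nZ; split.
    by apply: NNPP => nN; apply: K; left.
  by move=> m Nm; apply: NNPP => nZm; apply: K; right; exists m.
- have := closedNH; rewrite -openC openE => /(_ x nN) K.
  change (nbhs x (~` NH)) in K; change (nbhs x (~` (Zs j.+1))).
  by apply: (filterS _ K) => y /= nNy [].
- have c : (fun y => mul (mul (inv y) (inv m)) (mul y m)) @ x --> cm x m.
    have i1 : (fun y : G => y) @ x --> x by exact: cvg_id.
    have i2 : (fun y : G => m) @ x --> m by exact: cvg_cst.
    have i3 : (fun y : G => inv m) @ x --> inv m by exact: cvg_cst.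
    exact (cvg_mul HG (cvg_mul HG (cvg_inv HG i1) i3) (cvg_mul HG i1 i2)).
  have oC : open (~` Zs j) by rewrite openC.
  change (nbhs x (~` (Zs j.+1))).
  by apply: (filterS _ (nbhs_pre c oC nZm)) => y /= nZy [_ Zy]; apply: nZy; apply: Zy.
Qed.


Lemma LC c : lower_central mul inv one c = [set one] ->
  forall j i, (i + j = c)%N -> forall x,
  lower_central mul inv one i x -> NH x -> Zs j x.
Proof.
move=> E; elim=> [|j IH] i.
  rewrite addn0 => eic x; subst c; rewrite E => -> _; exact: H1.
move=> eij x Lx Nx; split => // m Nm; apply: (IH i.+1).
  by rewrite addSnnS.
  by move=> L _ sub; apply: sub; exists x, m.
rewrite /Defs.commg; apply: NHM; apply: NHM => //; exact: NHV.
Qed.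

Definition Acc j x := forall V, nbhs one V ->
  exists m, NH m /\ exists w, Zs j w /\ V (mul (conj m x) w).

Lemma Rlem c : lower_central mul inv one c = [set one] ->
  forall d j, (j + d = c)%N -> forall x, NH x -> Acc j x -> Zs j x.
Proof.
move=> E; elim=> [|d IH] j.
  rewrite addn0 => ejc x Nx _; subst c; apply: (LC E (i := 0)) => //.
have [INH I1 IM IV IC] := Zs_props j.
move=> ejd x Nx Ax.
have [_ Zx] : Zs j.+1 x.
  apply: (IH j.+1); first by rewrite addSnnS.
    by [].
  move=> V nV; have [m [Nm [w [Zw Vw]]]] := Ax V nV.
  by exists m; split => //; exists w; split => //; apply: Zs_mono.
apply: NNPP => nZ.
have nZi : ~ Zs j (inv x) by move=> /IV; rewrite (gII Hgrp).
have cv : (fun v => mul (inv x) v) @ one --> mul (inv x) one.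
  have i1 : (fun y : G => y) @ one --> one by exact: cvg_id.
  have i2 : (fun y : G => inv x) @ one --> inv x by exact: cvg_cst.
  exact (cvg_mul HG i2 i1).
have oC : open (~` Zs j) by rewrite openC; exact: Zs_closed.
have nZi' : (~` Zs j) (mul (inv x) one) by rewrite (gm1 Hgrp).
have [m [Nm [w [Zw Vw]]]] := Ax _ (nbhs_pre cv oC nZi').
apply: Vw => /=; rewrite -(C1 Hgrp) -(gA Hgrp) (gKV Hgrp).
by apply: IM => //; apply: Zx; apply: NHV.
Qed.

End Z.


Section CS.
Variables (G : Type) (mul : G -> G -> G) (inv : G -> G) (one : G).
Hypothesis Hgrp : is_group mul inv one.
Lemma conjset_mul a b L :
  conjset mul inv (mul a b) L = conjset mul inv a (conjset mul inv b L).
Proof.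
apply/seteqP; split.
  move=> _ [h Lh <-]; exists (gconj mul inv b h); first by exists h.
  by have := conjM Hgrp a b h; rewrite /gconj => <-.
move=> _ [_ [h Lh <-] <-]; exists h => //.
by have := conjM Hgrp a b h; rewrite /gconj => <-.
Qed.
Lemma conjset_one L : conjset mul inv one L = L.
Proof.
apply/seteqP; split.
  by move=> _ [h Lh <-]; have := conj1 Hgrp h; rewrite /gconj => ->.
move=> h Lh; exists h => //; have := conj1 Hgrp h; by rewrite /gconj => ->.
Qed.
End CS.

Unset Implicit Arguments.
Theorem lemma4p5
  (* the compact metrizable, locally connected group X and the minimal rotation T x = a x *)
  (X : topologicalType) (mulX : X -> X -> X) (invX : X -> X) (oneX : X)
  (HX : is_topgroup mulX invX oneX) (HXc : compact [set: X])
  (HXm : metrizable X) (HXlc : locally_connected X)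
  (a : X) (Hmin : minimal_map (rotn mulX invX oneX a 1))
  (* the nilpotent locally compact second countable (Hausdorff) group G *)
  (G : topologicalType) (mul : G -> G -> G) (inv : G -> G) (one : G)
  (HG : is_topgroup mul inv one) (HGh : hausdorff_space G)
  (HGlc : locally_compact [set: G]) (HGsc : @second_countable G)
  (HGnil : nilpotent_group mul inv one)
  (* the continuous topologically recurrent cocycle *)
  (f : X -> G) (Hfc : continuous f)
  (Hrec : top_recurrent (rotn mulX invX oneX a) (cocycle mulX invX oneX a mul inv one f) one)
  (* closed subgroup H and consistent selection y |-> H_y *)
  (H : set G) (HHsub : is_subgroup mul inv one H) (HHcl : closed H)
  (Hs : X -> set G)
  (Hs_in : forall y, conj_class mul inv H (Hs y))
  (Hs_cont : forall V : set (set G),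
      open [set g | V (conjset mul inv g H)] -> open [set y | V (Hs y)])
  (Hs_ess : forall y, Hs y `<=`
      ess_range (rotn mulX invX oneX a) (cocycle mulX invX oneX a mul inv one f) y)
  (Hs_eq : forall (y : X) (n : int),
      Hs (rotn mulX invX oneX a n y) =
      conjset mul inv (cocycle mulX invX oneX a mul inv one f n y) (Hs y))
  (Hnorm : forall y,
      ess_range (rotn mulX invX oneX a) (cocycle mulX invX oneX a mul inv one f) y
      `<=` normaliser mul inv (Hs y))
  (Hx : exists x,
      ess_range (rotn mulX invX oneX a) (cocycle mulX invX oneX a mul inv one f) x = Hs x)
  (z : X) (g : G) (Hg : normaliser mul inv (Hs z) g) (Hgn : ~ Hs z g) :
  exists U : set G, nbhs one U /\
    forall n : int,
      conjset mul inv (cocycle mulX invX oneX a mul inv one f n z)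
        (lcoset mul g (Hs z)) `&` U = set0.
Proof.
have Hgrp := HG.1.
have [cN EcN] := HGnil.
apply: NNPP => Hno.
have [e He] := Hs_in z.
set g' := gconj mul inv (inv e) g.
have Ng' : normaliser mul inv H g'.
  rewrite /normaliser /= /g' /gconj (gII Hgrp) !(conjset_mul Hgrp) -He.
  move: Hg; rewrite /normaliser /= => ->.
  by rewrite He -(conjset_mul Hgrp) (gVm Hgrp) (conjset_one Hgrp).
have nHg' : ~ H g'.
  move=> Hg'; apply: Hgn; rewrite He; exists g' => //.
  by rewrite /g'; gsimp Hgrp.
have Acc0 : Acc mul inv one H 0 g'.
  move=> V nV.
  pose P := fun u y => exists a, Hs y = conjset mul inv a H /\
                                  V (gconj mul inv (inv a) u).
  have cov : \forall u \near one, [set: X] `<=` P u.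
    apply: ((compact_near_coveringP [set: X]).1 HXc) => y0 _.
    have [a0 Ha0] := Hs_in y0.
    pose phi := fun p : G * G => gconj mul inv (inv p.1) p.2.
    have cp : phi @ (a0, one) --> phi (a0, one).
      have c1 : (fun p : G * G => p.1) @ (a0, one) --> a0 by exact: cvg_fst.
      have c2 : (fun p : G * G => p.2) @ (a0, one) --> one by exact: cvg_snd.
      exact (cvg_mul HG (cvg_mul HG (cvg_inv HG c1) c2) (cvg_inv HG (cvg_inv HG c1))).
    have nV' : nbhs (phi (a0, one)) V.
      by have -> : phi (a0, one) = one by rewrite /phi /=; gsimp Hgrp.
    have [[B U'] [Ba0 U'1] BU] := cp _ nV'.
    pose O := [set y | exists b, B° b /\ Hs y = conjset mul inv b H].
    have oO : open O.
      apply: (Hs_cont (fun K => exists b, B° b /\ K = conjset mul inv b H)).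
      rewrite openE => g0 /= [b [Bb Eb]].
      set n := mul (inv b) g0.
      have En : conjset mul inv n H = H.
        by rewrite /n (conjset_mul Hgrp) Eb -(conjset_mul Hgrp) (gVm Hgrp) (conjset_one Hgrp).
      have cpsi : (fun y => mul y (inv n)) @ g0 --> mul g0 (inv n).
        have i1 : (fun y : G => y) @ g0 --> g0 by exact: cvg_id.
        have i2 : (fun y : G => inv n) @ g0 --> inv n by exact: cvg_cst.
        exact (cvg_mul HG i1 i2).
      have Bb' : B° (mul g0 (inv n)) by rewrite /n; gsimp Hgrp.
      apply: (filterS _ (nbhs_pre cpsi (@open_interior _ B) Bb')) => y /= By.
      exists (mul y (inv n)); split => //.
      rewrite -[in RHS]En -(conjset_mul Hgrp).
      by congr (conjset mul inv _ H); gsimp Hgrp.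
    rewrite /prop_near2 /=. exists (O, U').
      split => //=.
      by move: oO; rewrite openE; apply; exists a0; split.
    move=> [y u] [/= [b [Bb Eb]] U'u]; exists b; split => //.
    by apply: (BU (b, u)); split => //=; apply: nbhs_singleton.
  have [u0 [n [u [[k [h Hh <-] <-] Uu]]]] : exists u0 : unit, exists n u,
      conjset mul inv (cocycle mulX invX oneX a mul inv one f n z)
        (lcoset mul g (Hs z)) u /\ [set u | [set: X] `<=` P u] u.
    apply: NNPP => K; apply: Hno; exists [set u | [set: X] `<=` P u]; split => //.
    move=> n; apply/seteqP; split => // u [Su Uu]; apply: K.
    by exists tt, n, u.
  have [b [Eb Vb]] := Uu (rotn mulX invX oneX a n z) Logic.I.
  move: Eb; rewrite Hs_eq He -(conjset_mul Hgrp) => Eb.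
  move: Hh; rewrite He => -[h' Hh' Eh]; subst h.
  set c := cocycle mulX invX oneX a mul inv one f n z in Eb Vb *.
  pose m := mul (inv b) (mul c e).
  have Nm : normaliser mul inv H m.
    by rewrite /normaliser /= /m (conjset_mul Hgrp) Eb -(conjset_mul Hgrp)
      (gVm Hgrp) (conjset_one Hgrp).
  exists m; split. exact (normNH HG Nm).
  exists (gconj mul inv m h'); split; first exact: (normNH HG Nm Hh').1.
  suff -> : mul (gconj mul inv m g') (gconj mul inv m h') =
     gconj mul inv (inv b) (mul (mul c (mul g (mul (mul e h') (inv e)))) (inv c)) by [].
  by rewrite /m /g'; gsimp Hgrp.
have := Rlem HG HHsub HHcl EcN (d := cN) (j := 0) erefl (normNH HG Ng') Acc0.
by [].
Qed.
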